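(* Let $E$ be a Fréchet space with increasing fundamental system of seminorms $(p_{\alpha_n})_{n\in\mathbb{N}}$, and let $B_n:=B_{\alpha_n}^\circ$ where $B_{\alpha_n}:=\{x\in E:p_{\alpha_n}(x)<1\}$, $n\in\mathbb{N}$. Let $(T^{E}_{m},T^{\mathbb{K}}_{m})_{m\in\mathcal{M}}$ be a strong, consistent family for $(\mathcal{FV},E)$, let $\mathcal{FV}(\Omega)$ be a semi-Montel space and $U$ a set of uniqueness for $\mathcal{FV}(\Omega)$. Then the restriction map \[ R_{U,E'}\colon S(\mathcal{FV}(\Omega)\varepsilon E)\to\mathcal{FV}_{E'}(U,E)_{sb},\quad f\mapsto (T^E_m(f)(x))_{(m,x)\in U}, \] is surjective.
   Context: $\mathbb{K}\in\{\mathbb{R},\mathbb{C}\}$; $E'$ is the dual of $E$ and $B^\circ$ denotes the polar in $E'$. Semi-Montel: bounded sets are relatively compact. Weighted function spaces: Let $\Omega,J,L$ be non-empty sets, $(M_l)_{l\in L}$ non-empty sets and $\mathcal{V}=((\nu_{j,l,m})_{m\in M_l})_{j\in J,l\in L}$ functions $\nu_{j,l,m}\colon\Omega\to[0,\infty)$ such that for all $x\in\Omega$, $l\in L$ there is $j$ with $\nu_{j,l,m}(x)>0$ for all $m\in M_l$. Let $\mathcal{M}_{\mathrm{top}}:=\bigcup_lM_l$, and $\mathcal{M}_0,\mathcal{M}_r$ sets, the three pairwise disjoint, $\mathcal{M}$ their union; $(\omega_m)_{m\in\mathcal{M}}$ non-empty sets with $\Omega\subset\omega_m$ for $m\in\mathcal{M}_{\mathrm{top}}$.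 For $F\in\{E,\mathbb{K}\}$ (with seminorms $(p_{\alpha_n})$ on $E$, $|\cdot|$ on $\mathbb{K}$) let $T^F_m\colon\operatorname{dom}T^F_m\subset F^\Omega\to F^{\omega_m}$ be linear. $\mathcal{FV}(\Omega,F)$ is the set of $f\in\bigcap_{m\in\mathcal{M}}\operatorname{dom}T^F_m\cap\bigcap_{m\in\mathcal{M}_0}\ker T^F_m$ with $|f|_{j,l,\alpha}:=\sup_{x\in\Omega,m\in M_l}p_\alpha(T^F_m(f)(x))\nu_{j,l,m}(x)<\infty$ for all $j,l,\alpha$, with these seminorms; $\mathcal{FV}(\Omega):=\mathcal{FV}(\Omega,\mathbb{K})$; $T^F_{m,x}(f):=T^F_m(f)(x)$. A dom-space: seminorms directed and, in the scalar case, point evaluations $\delta_x$ continuous. $\mathcal{FV}(\Omega)\varepsilon E$: continuous linear maps $\mathcal{FV}(\Omega)'_\kappa\to E$ ($\kappa$: uniform convergence on absolutely convex compact sets), $S(u)(x):=u(\delta_x)$. With $\mathcal{FV}(\Omega)$, $\mathcal{FV}(\Omega,E)$ dom-spaces built from the same data with operators $T^{\mathbb{K}}_m$, $T^E_m$, the family is consistent if for all $u$, $m$, $x\in\omega_m$: $S(u)\in\operatorname{dom}T^E_m$, $T^{\mathbb{K}}_{m,x}|_{\mathcal{FV}(\Omega)}\in\mathcal{FV}(\Omega)'$ and $T^E_m(S(u))(x)=u(T^{\mathbb{K}}_{m,x})$; strong if for all $e'\in E'$, $f\in\mathcal{FV}(\Omega,E)$, $m$: $e'\circ f\in\operatorname{dom}T^{\mathbb{K}}_m$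 and $T^{\mathbb{K}}_m(e'\circ f)=e'\circ T^E_m(f)$ on $\omega_m$. $U\subset\bigcup_m\{m\}\times\omega_m$ is a set of uniqueness for $\mathcal{FV}(\Omega)$ if $T^{\mathbb{K}}_{m,x}\in\mathcal{FV}(\Omega)'$ for $(m,x)\in U$ and $f\in\mathcal{FV}(\Omega)$ with $T^{\mathbb{K}}_m(f)(x)=0$ for all $(m,x)\in U$ is $0$. $\mathcal{FV}_{E'}(U,E)$ is the set of $f\colon U\to E$ such that for each $e'\in E'$ there is a (unique) $f_{e'}\in\mathcal{FV}(\Omega)$ with $T^{\mathbb{K}}_m(f_{e'})(x)=e'(f(m,x))$ for all $(m,x)\in U$; $\mathcal{FV}_{E'}(U,E)_{sb}$ is the set of such $f$ for which $\{f_{e'}:e'\in B_n\}$ is bounded in $\mathcal{FV}(\Omega)$ for every $n\in\mathbb{N}$. *)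

(* Defs.v *)
From Stdlib Require List.
From HB Require Import structures.
From mathcomp Require Import all_boot all_order all_algebra reals complex.
Set Implicit Arguments. Unset Strict Implicit. Unset Printing Implicit Defensive.
Import Order.TTheory GRing.Theory Num.Theory.
Local Open Scope ring_scope.

Definition RC (R : realType) (b : bool) : numFieldType :=
  if b then (R : numFieldType) else (R[i] : numFieldType).

(* Data of a weighted function space:
   Omega (embedded by the injective map emb into an ambient type X, in which
   the sets omega_m live), index sets J, L, the index type Mset (the union
   M = M_top u M_0 u M_r), the sets M_l, the sets omega_m and weights nu. *)
Record wdata (K : numFieldType) := WData {
  Omega : Type;
  X : Type;
  emb : Omega -> X;
  J : Type;
  L : Type;
  Mset : Type;
  Mtop : Mset -> Prop;
  M0 : Mset -> Prop;
  Mr : Mset -> Prop;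
  Ml : L -> Mset -> Prop;
  omega : Mset -> X -> Prop;
  nu : J -> L -> Mset -> Omega -> K }.

Arguments Omega {K} w.  Arguments X {K} w.  Arguments emb {K} w _.
Arguments J {K} w.  Arguments L {K} w.  Arguments Mset {K} w.
Arguments Mtop {K} w _.  Arguments M0 {K} w _.  Arguments Mr {K} w _.
Arguments Ml {K} w _ _.  Arguments omega {K} w _ _.  Arguments nu {K} w _ _ _ _.

Section Defs.
Variables (K : numFieldType) (W : wdata K).

Definition wdata_ok : Prop :=
  [/\ inhabited (Omega W), inhabited (J W), inhabited (L W),
   (forall l, exists m, Ml W l m) & [/\
   (forall m, Mtop W m <-> exists l, Ml W l m),
   (forall m, ~ (Mtop W m /\ M0 W m) /\ ~ (Mtop W m /\ Mr W m) /\ ~ (M0 W m /\ Mr W m)),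
   (forall m, Mtop W m \/ M0 W m \/ Mr W m),
   (forall m, exists y, omega W m y) &
   [/\ (forall m, Mtop W m -> forall x, omega W m (emb W x)),
       (forall x1 x2, emb W x1 = emb W x2 -> x1 = x2),
       (forall j l m x, 0 <= nu W j l m x) &
       (forall x l, exists j, forall m, Ml W l m -> 0 < nu W j l m x)]]].

Definition fadd (F : lmodType K) (f g : Omega W -> F) : Omega W -> F :=
  fun x => f x + g x.
Definition fscale (F : lmodType K) (a : K) (f : Omega W -> F) : Omega W -> F :=
  fun x => a *: f x.
Definition fzero (F : lmodType K) : Omega W -> F := fun _ => 0.

(* a family of linear operators T_m : dom T_m (subspace of F^Omega) -> F^{omega_m} *)
Definition lin_ops (F : lmodType K) (dom : Mset W -> (Omega W -> F) -> Prop)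
  (T : Mset W -> (Omega W -> F) -> X W -> F) : Prop :=
  forall m, dom m (fzero F) /\
   forall a f g, dom m f -> dom m g ->
     dom m (fadd (fscale a f) g) /\
     forall y, omega W m y -> T m (fadd (fscale a f) g) y = a *: T m f y + T m g y.

(* b bounds the seminorm |f|_{j,l,alpha} (i.e. |f|_{j,l,alpha} <= b) *)
Definition bnd (F : lmodType K) (A : Type) (q : A -> F -> K)
  (T : Mset W -> (Omega W -> F) -> X W -> F) (j : J W) (l : L W) (a : A)
  (f : Omega W -> F) (b : K) : Prop :=
  forall x m, Ml W l m -> q a (T m f (emb W x)) * nu W j l m x <= b.

Definition inFV (F : lmodType K) (A : Type) (q : A -> F -> K)
  (dom : Mset W -> (Omega W -> F) -> Prop)
  (T : Mset W -> (Omega W -> F) -> X W -> F) (f : Omega W -> F) : Prop :=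
  [/\ (forall m, dom m f),
      (forall m, M0 W m -> forall y, omega W m y -> T m f y = 0) &
      (forall j l a, exists b, bnd q T j l a f b)].

(* directedness of the seminorms (first half of "dom-space") *)
Definition directed (F : lmodType K) (A : Type) (q : A -> F -> K)
  (dom : Mset W -> (Omega W -> F) -> Prop)
  (T : Mset W -> (Omega W -> F) -> X W -> F) : Prop :=
  forall (j1 j2 : J W) (l1 l2 : L W) (a1 a2 : A), exists j3 l3 a3 (C : K),
    0 < C /\ forall f, inFV q dom T f -> forall b, bnd q T j3 l3 a3 f b ->
      bnd q T j1 l1 a1 f (C * b) /\ bnd q T j2 l2 a2 f (C * b).

Definition qK : unit -> K^o -> K := fun _ (k : K) => `|k|.

Section Scalar.
Variables (domK : Mset W -> (Omega W -> K^o) -> Prop)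
          (TK : Mset W -> (Omega W -> K^o) -> X W -> K^o).

Definition FVK (f : Omega W -> K^o) : Prop := inFV qK domK TK f.
Definition bndK (i : J W * L W) (f : Omega W -> K^o) (b : K) : Prop :=
  bnd qK TK i.1 i.2 tt f b.

Definition sball (s : seq (J W * L W)) (f : Omega W -> K^o) (eps : K)
  (g : Omega W -> K^o) : Prop :=
  FVK g /\ forall i, List.In i s ->
    exists d, d < eps /\ bndK i (fadd g (fscale (-1) f)) d.

Definition openFV (V : (Omega W -> K^o) -> Prop) : Prop :=
  forall f, FVK f -> V f ->
    exists s eps, 0 < eps /\ forall g, sball s f eps g -> V g.

Definition compactFV (C : (Omega W -> K^o) -> Prop) : Prop :=
  (forall f, C f -> FVK f) /\
  forall (I : Type) (V : I -> (Omega W -> K^o) -> Prop),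
    (forall i, openFV (V i)) -> (forall f, C f -> exists i, V i f) ->
    exists s : seq I, forall f, C f -> exists i, List.In i s /\ V i f.

Definition closureFV (A : (Omega W -> K^o) -> Prop) (f : Omega W -> K^o) : Prop :=
  FVK f /\ forall s eps, 0 < eps -> exists g, A g /\ sball s f eps g.

Definition boundedFV (A : (Omega W -> K^o) -> Prop) : Prop :=
  (forall f, A f -> FVK f) /\ forall i, exists b, forall f, A f -> bndK i f b.

Definition semi_Montel : Prop :=
  forall A, boundedFV A -> compactFV (closureFV A).

Definition abs_convex (C : (Omega W -> K^o) -> Prop) : Prop :=
  forall f g (a c : K), C f -> C g -> `|a| + `|c| <= 1 ->
    C (fadd (fscale a f) (fscale c g)).

(* the dual FV(Omega)' (functionals are represented by functions on K^Omega,
   only their values on FV(Omega) matter) *)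
Definition dualFV (y : (Omega W -> K^o) -> K) : Prop :=
  (forall a f g, FVK f -> FVK g -> y (fadd (fscale a f) g) = a * y f + y g) /\
  exists (s : seq (J W * L W)) (C : K), forall f, FVK f ->
    forall b, (forall i, List.In i s -> bndK i f b) -> `|y f| <= C * b.

Definition delta (x : Omega W) : (Omega W -> K^o) -> K := fun f => f x.
Definition TKx (m : Mset W) (y : X W) : (Omega W -> K^o) -> K := fun f => TK m f y.

Definition set_of_uniqueness (U : Mset W -> X W -> Prop) : Prop :=
  (forall m y, U m y -> omega W m y) /\
  (forall m y, U m y -> dualFV (TKx m y)) /\
  (forall f, FVK f -> (forall m y, U m y -> TK m f y = 0) -> forall x, f x = 0).

Section EValued.
Variables (E : lmodType K) (p : nat -> E -> K).

Definition frechet : Prop :=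
  [/\ (forall n x, 0 <= p n x),
      (forall n x y, p n (x + y) <= p n x + p n y),
      (forall n (a : K) x, p n (a *: x) = `|a| * p n x),
      (forall n x, p n x <= p n.+1 x) &
      ((forall x, (forall n, p n x = 0) -> x = 0) /\
      (forall u : nat -> E,
         (forall n eps, 0 < eps -> exists N, forall i k, (N <= i)%N -> (N <= k)%N ->
            p n (u i - u k) < eps) ->
         exists x, forall n eps, 0 < eps -> exists N, forall i, (N <= i)%N ->
            p n (u i - x) < eps))].

Definition dualE (e' : E -> K) : Prop :=
  (forall a x y, e' (a *: x + y) = a * e' x + e' y) /\
  exists n (C : K), forall x, `|e' x| <= C * p n x.

Definition polarB (n : nat) (e' : E -> K) : Prop :=
  dualE e' /\ forall x, p n x < 1 -> `|e' x| <= 1.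

(* FV(Omega) eps E: continuous linear maps FV(Omega)'_kappa -> E *)
Definition epsFV (u : ((Omega W -> K^o) -> K) -> E) : Prop :=
  (forall (a : K) y1 y2, dualFV y1 -> dualFV y2 ->
     u (fun f => a * y1 f + y2 f) = a *: u y1 + u y2) /\
  forall n, exists (Ks : seq ((Omega W -> K^o) -> Prop)) (C : K),
    (forall Kc, List.In Kc Ks -> abs_convex Kc /\ compactFV Kc) /\
    forall y, dualFV y -> forall b,
      (forall Kc, List.In Kc Ks -> forall f, Kc f -> `|y f| <= b) ->
      p n (u y) <= C * b.

Definition Sop (u : ((Omega W -> K^o) -> K) -> E) : Omega W -> E :=
  fun x => u (delta x).

Variables (domE : Mset W -> (Omega W -> E) -> Prop)
          (TE : Mset W -> (Omega W -> E) -> X W -> E).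

Definition FVE (f : Omega W -> E) : Prop := inFV p domE TE f.

Definition dom_spaces : Prop :=
  [/\ directed qK domK TK, directed p domE TE & forall x, dualFV (delta x)].

Definition consistent : Prop :=
  forall u, epsFV u -> forall m y, omega W m y ->
    [/\ domE m (Sop u), dualFV (TKx m y) & TE m (Sop u) y = u (TKx m y)].

Definition strong : Prop :=
  forall e', dualE e' -> forall f, FVE f -> forall m,
    domK m (fun x => e' (f x)) /\
    forall y, omega W m y -> TK m (fun x => e' (f x)) y = e' (TE m f y).

Definition FVE'U (U : Mset W -> X W -> Prop) (f : Mset W -> X W -> E) : Prop :=
  forall e', dualE e' -> exists g, FVK g /\ forall m y, U m y -> TK m g y = e' (f m y).

Definition FVE'U_sb (U : Mset W -> X W -> Prop) (f : Mset W -> X W -> E) : Prop :=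
  FVE'U U f /\
  forall n, boundedFV (fun g => exists e', polarB n e' /\
     FVK g /\ forall m y, U m y -> TK m g y = e' (f m y)).

End EValued.
End Scalar.
End Defs.

(* Main.v *)
Require Import Defs.
From HB Require Import structures.
From mathcomp Require Import all_boot all_order all_algebra reals complex.
From mathcomp Require Import unstable boolp classical_sets functions.
From mathcomp Require Import ring lra.
Set Implicit Arguments. Unset Strict Implicit. Unset Printing Implicit Defensive.
Import Order.TTheory GRing.Theory Num.Theory.
Local Open Scope ring_scope.
Local Open Scope classical_set_scope.
Definition subsp {K : pzRingType} {V : lmodType K} (P : V -> Prop) :=
  P 0 /\ (forall a x y, P x -> P y -> P (a *: x + y)).
Definition linon {K : pzRingType} {V : lmodType K} (P : V -> Prop) (f : V -> K) :=
  forall a x y, P x -> P y -> f (a *: x + y) = a * f x + f y.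

Section SubspLemmas.
Variables (K : pzRingType) (V : lmodType K).
Lemma subsp0 (P : V -> Prop) : subsp P -> P 0. Proof. by case. Qed.
Lemma subspD (P : V -> Prop) x y : subsp P -> P x -> P y -> P (x + y).
Proof. by move=> sP Px Py; have := sP.2 1 x y Px Py; rewrite scale1r. Qed.
Lemma subspZ (P : V -> Prop) a x : subsp P -> P x -> P (a *: x).
Proof. by move=> sP Px; have := sP.2 a x 0 Px (subsp0 sP); rewrite addr0. Qed.
Lemma subspN (P : V -> Prop) x : subsp P -> P x -> P (- x).
Proof. by move=> sP Px; rewrite -scaleN1r; apply: subspZ. Qed.
Lemma subspB (P : V -> Prop) x y : subsp P -> P x -> P y -> P (x - y).
Proof. by move=> sP Px Py; apply: subspD => //; apply: subspN. Qed.
Lemma linon0 (P : V -> Prop) f : subsp P -> linon P f -> f 0 = 0.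
Proof. move=> sP fl; have := fl 1 _ _ (subsp0 sP) (subsp0 sP).
rewrite scaler0 addr0 mul1r => h.
by apply: (addIr (f 0)); rewrite add0r -h. Qed.
Lemma linonD (P : V -> Prop) f x y : subsp P -> linon P f -> P x -> P y -> f (x + y) = f x + f y.
Proof. by move=> sP fl Px Py; have := fl 1 _ _ Px Py; rewrite scale1r mul1r. Qed.
Lemma linonZ (P : V -> Prop) f a x : subsp P -> linon P f -> P x -> f (a *: x) = a * f x.
Proof. by move=> sP fl Px; have := fl a _ _ Px (subsp0 sP); rewrite addr0 (linon0 sP fl) addr0. Qed.
Lemma linonN (P : V -> Prop) f x : subsp P -> linon P f -> P x -> f (- x) = - f x.
Proof. by move=> sP fl Px; rewrite -scaleN1r (linonZ (-1) sP fl Px) mulN1r. Qed.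
Lemma linonB (P : V -> Prop) f x y : subsp P -> linon P f -> P x -> P y -> f (x - y) = f x - f y.
Proof. by move=> sP fl Px Py; rewrite (linonD sP fl) ?(linonN sP fl) //; apply: subspN. Qed.
End SubspLemmas.

Section RHB.
Variables (R : realType) (V : lmodType R) (P M : V -> Prop) (q : V -> R) (l : V -> R).
Hypotheses (sP : subsp P) (sM : subsp M) (MP : forall x, M x -> P x)
 (qD : forall x y, P x -> P y -> q (x + y) <= q x + q y)
 (qZ : forall (t : R) x, 0 < t -> P x -> q (t *: x) = t * q x)
 (lM : linon M l) (lq : forall x, M x -> l x <= q x).

Record valid (D : V -> Prop) (g : V -> R) : Prop := Valid {
  vs : subsp D; vM : forall x, M x -> D x; vP : forall x, D x -> P x;
  vl : linon D g; vgl : forall x, M x -> g x = l x; vq : forall x, D x -> g x <= q x }.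

Definition TT := {dg : (V -> Prop) * (V -> R) | valid dg.1 dg.2}.
Definition leT (s t : TT) : Prop :=
  (forall x, (sval s).1 x -> (sval t).1 x) /\
  (forall x, (sval s).1 x -> (sval t).2 x = (sval s).2 x).

Lemma valid0 : valid M l.
Proof. by split=> // x Mx; apply: lq. Qed.

Section Ext.
Variables (D : V -> Prop) (g : V -> R) (vD : valid D g) (x0 : V).
Hypotheses (Px0 : P x0) (nDx0 : ~ D x0).

Let S := [set r | exists d, D d /\ r = g d - q (d - x0)].
Let c := sup S.

Lemma keyineq d1 d2 : D d1 -> D d2 -> g d1 - q (d1 - x0) <= q (d2 + x0) - g d2.
Proof.
move=> D1 D2.
have Pd1 := vP vD D1; have Pd2 := vP vD D2.
have h1 : g d1 + g d2 = g (d1 + d2) by rewrite (linonD (vs vD) (vl vD)).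
have h2 : g (d1 + d2) <= q (d1 + d2) by apply: (vq vD); apply: subspD (vs vD) _ _.
have e : d1 + d2 = (d1 - x0) + (d2 + x0) by rewrite addrACA addNr addr0.
have h3 : q (d1 + d2) <= q (d1 - x0) + q (d2 + x0).
  by rewrite e; apply: qD; [apply: subspB | apply: subspD].
lra.
Qed.

Lemma S_ub d : D d -> g d - q (d - x0) <= c.
Proof.
move=> Dd; apply: ub_le_sup; last by exists d.
exists (q (0 + x0) - g 0) => r [d1 [Dd1 ->]].
by apply: keyineq => //; apply: subsp0 (vs vD).
Qed.

Lemma S_lb d : D d -> c <= q (d + x0) - g d.
Proof.
move=> Dd; apply: ge_sup.
  by exists (g 0 - q (0 - x0)), 0; split=> //; apply: subsp0 (vs vD).
by move=> r [d1 [Dd1 ->]]; apply: keyineq.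
Qed.

Lemma repr_uniq d1 t1 d2 t2 : D d1 -> D d2 -> d1 + t1 *: x0 = d2 + t2 *: x0 ->
  d1 = d2 /\ t1 = t2.
Proof.
move=> D1 D2 e.
have [/eqP t12|nt] := eqVneq (t1 - t2) 0.
  move: t12; rewrite subr_eq0 => /eqP t12; subst t2; split=> //.
  by move: e => /eqP; rewrite (inj_eq (addIr _)) => /eqP.
exfalso; apply: nDx0.
have : (t1 - t2) *: x0 = d2 - d1.
  have -> : d2 = d1 + ((t1 - t2) *: x0) by rewrite scalerBl addrA e addrK.
  by rewrite [d1 + _]addrC addrK.
move=> /(congr1 (fun v => (t1 - t2)^-1 *: v)); rewrite scalerA mulVf // scale1r => ->.
by apply: subspZ _ (vs vD) _; apply: subspB (vs vD) _ _.
Qed.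

Definition D' v := exists d t, D d /\ v = d + t *: x0.
Definition g' v := match pselect (exists dt : V * R, D dt.1 /\ v = dt.1 + dt.2 *: x0) with
  | left H => let dt := projT1 (cid H) in g dt.1 + dt.2 * c
  | right _ => 0 end.

Lemma g'E d t : D d -> g' (d + t *: x0) = g d + t * c.
Proof.
move=> Dd; rewrite /g'; case: pselect => [H|[]]; last by exists (d, t).
case: (cid H) => [[d1 t1] [/= D1 e]] /=.
by have [-> ->] := repr_uniq D1 Dd (esym e).
Qed.

Lemma validD' : valid D' g'.
Proof.
have s := vs vD.
have D'E : forall d, D d -> D' d by move=> d Dd; exists d, 0; rewrite scale0r addr0.
have g'D : forall d, D d -> g' d = g d.
  by move=> d Dd; have := g'E 0 Dd; rewrite scale0r addr0 mul0r addr0.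
split.
- split; first by apply: D'E; apply: subsp0 s.
  move=> a _ _ [d1 [t1 [D1 ->]]] [d2 [t2 [D2 ->]]].
  exists (a *: d1 + d2), (a * t1 + t2); split; first by apply: s.2.
  by rewrite scalerDr scalerA scalerDl; rewrite -!addrA; congr (_ + _);
     rewrite addrCA.
- by move=> x Mx; apply: D'E; apply: (vM vD).
- move=> _ [d [t [Dd ->]]]; apply: subspD sP _ _; first by apply: (vP vD).
  by apply: subspZ.
- move=> a _ _ [d1 [t1 [D1 ->]]] [d2 [t2 [D2 ->]]].
  have -> : a *: (d1 + t1 *: x0) + (d2 + t2 *: x0) = (a *: d1 + d2) + (a * t1 + t2) *: x0.
    by rewrite scalerDr scalerA scalerDl; rewrite -!addrA; congr (_ + _);
     rewrite addrCA.
  rewrite !g'E //; last by apply: s.2.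
  by rewrite (vl vD) //; ring.
- by move=> x Mx; rewrite g'D ?(vgl vD) //; apply: (vM vD).
- move=> _ [d [t [Dd ->]]]; rewrite g'E //.
  have [t0|tn0] := eqVneq t 0.
    by rewrite t0 scale0r addr0 mul0r addr0; apply: (vq vD).
  have Pd := vP vD Dd.
  have [tpos|tneg] := ltrP 0 t.
  + have Dd' : D (t^-1 *: d) by apply: subspZ.
    have := S_lb Dd'.
    have -> : q (d + t *: x0) = t * q (t^-1 *: d + x0).
      rewrite -qZ //; last by apply: subspD sP _ _ => //; apply: subspZ.
      by rewrite scalerDr scalerA divff ?scale1r // gt_eqF.
    rewrite (linonZ _ s (vl vD)) // => h.
    have : t * c <= t * (q (t^-1 *: d + x0) - t^-1 * g d) by rewrite ler_pM2l.
    by rewrite mulrBr mulrA divff ?mul1r ?gt_eqF //; lra.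
  + have tlt : t < 0 by rewrite lt_neqAle tn0.
    set s' := - t.
    have spos : 0 < s' by rewrite /s' oppr_gt0.
    have Dd' : D (s'^-1 *: d) by apply: subspZ.
    have := S_ub Dd'.
    have -> : q (d + t *: x0) = s' * q (s'^-1 *: d - x0).
      rewrite -qZ //; last by apply: subspB sP _ _ => //; apply: subspZ.
      by rewrite scalerBr scalerA divff ?scale1r ?gt_eqF // /s' scaleNr opprK.
    rewrite (linonZ _ s (vl vD)) // => h.
    have : s' * (s'^-1 * g d - q (s'^-1 *: d - x0)) <= s' * c by rewrite ler_pM2l.
    rewrite mulrBr mulrA divff ?mul1r ?gt_eqF //.
    have -> : t * c = - (s' * c) by rewrite /s' mulNr opprK.
    lra.
Qed.

End Ext.

Lemma RHB_ext : exists L, [/\ linon P L, (forall x, M x -> L x = l x) &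
   (forall x, P x -> L x <= q x)].
Proof.
pose t0 : TT := exist _ (M, l) valid0.
have : exists t : TT, premaximal (fun s t => `[< leT s t >]) t.
apply: (@ZL_preorder TT t0).
- by move=> t; apply/asboolP; split.
- move=> r s u /asboolP [h1 h2] /asboolP [h3 h4]; apply/asboolP; split.
    by move=> x /h1 /h3.
  by move=> x rx; rewrite h4 ?h2 //; apply: h1.
- move=> A Atot.
  have tot : forall s u, A s -> A u -> leT s u \/ leT u s.
    by move=> s u As Au; case: (Atot s u As Au) => /asboolP; [left|right].
  pose Du x := M x \/ exists s, A s /\ (sval s).1 x.
  pose gu x := match pselect (exists s, A s /\ (sval s).1 x) with
    | left H => (sval (projT1 (cid H))).2 x | right _ => l x end.
  have guE : forall s x, A s -> (sval s).1 x -> gu x = (sval s).2 x.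
    move=> s x As sx; rewrite /gu; case: pselect => [H|[]]; last by exists s.
    case: (cid H) => u [Au ux] /=.
    by case: (tot s u As Au) => [[_ h]|[_ h]]; rewrite h.
  have guM : forall x, M x -> gu x = l x.
    move=> x Mx; rewrite /gu; case: pselect => [H|//].
    case: (cid H) => u [Au ux] /=.
    by case: (svalP u) => /= _ _ _ _ h _; apply: h.
  have two : forall x y, Du x -> Du y -> (M x /\ M y) \/
      exists s, A s /\ (sval s).1 x /\ (sval s).1 y.
    move=> x y [Mx|[s [As sx]]] [My|[u [Au uy]]].
    + by left.
    + right; exists u; split=> //; split=> //.
      by case: (svalP u) => /= _ h _ _ _ _; apply: h.
    + right; exists s; split=> //; split=> //.
      by case: (svalP s) => /= _ h _ _ _ _; apply: h.
    + right; case: (tot s u As Au) => [[h _]|[h _]].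
        by exists u; split=> //; split=> //; apply: h.
      by exists s; split=> //; split=> //; apply: h.
  have vu : valid Du gu.
    split.
    - split; first by left; apply: subsp0.
      move=> a x y Dx Dy; case: (two x y Dx Dy) => [[Mx My]|[s [As [sx sy]]]].
        by left; apply: sM.2.
      right; exists s; split=> //.
      by case: (svalP s) => /= h _ _ _ _ _; apply: h.2.
    - by move=> x Mx; left.
    - move=> x [Mx|[s [As sx]]]; first by apply: MP.
      by case: (svalP s) => /= _ _ h _ _ _; apply: h.
    - move=> a x y Dx Dy; case: (two x y Dx Dy) => [[Mx My]|[s [As [sx sy]]]].
        by rewrite !guM //; [apply: lM | apply: sM.2].
      case: (svalP s) => /= h _ _ hl _ _.
      by rewrite !(guE s) //; [apply: hl | apply: h.2].
    - exact: guM.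
    - move=> x [Mx|[s [As sx]]]; first by rewrite guM //; apply: lq.
      case: (svalP s) => /= _ _ _ _ _ h.
      by rewrite (guE s) //; apply: h.
  exists (exist _ (Du, gu) vu) => s As; apply/asboolP; split=> /=.
    by move=> x sx; right; exists s.
  by move=> x sx; apply: guE.
move=> [[[D g] vD] tmax].
have DP : forall x, P x -> D x.
  move=> x0 Px0; have [//|nD] := pselect (D x0); exfalso.
  have v' := validD' vD Px0 nD.
  have le1 : leT (exist _ (D, g) vD) (exist _ (D' D x0, g' D g x0) v').
    split=> /= x Dx; first by exists x, 0; rewrite scale0r addr0.
    by have := g'E vD nD 0 Dx; rewrite scale0r addr0 mul0r addr0.
  have /asboolP [h _] := tmax _ (asboolT le1).
  by apply: nD; apply: h; exists 0, 1; rewrite scale1r add0r; split=> //;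
     apply: subsp0 (vs vD).
exists g; split.
- move=> a x y Px Py; apply: (vl vD); by apply: DP.
- exact: (vgl vD).
- by move=> x Px; apply: (vq vD); apply: DP.
Qed.
End RHB.
Section RHBset.
Variables (R : realType) (V : lmodType R) (P M A : V -> Prop) (l : V -> R).
Hypotheses (sP : subsp P) (sM : subsp M) (MP : forall x, M x -> P x)
  (AP : forall x, A x -> P x)
  (Aconv : forall x y (a c : R), A x -> A y -> `|a| + `|c| <= 1 -> A (a *: x + c *: y))
  (Aabs : forall x, P x -> exists s : R, 0 < s /\ A (s^-1 *: x))
  (lM : linon M l) (lA : forall x, M x -> A x -> l x <= 1).

Lemma Abal x a : A x -> `|a| <= 1 -> A (a *: x).
Proof.
move=> Ax ha; have := @Aconv x x a 0 Ax Ax; rewrite normr0 addr0 scale0r addr0; exact.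
Qed.

Let gS x := [set s : R | 0 < s /\ A (s^-1 *: x)].
Let nu x := inf (gS x).

Lemma gS_lb x : has_lbound (gS x).
Proof. by exists 0 => s [/ltW]. Qed.

Lemma nu_le x s : 0 < s -> A (s^-1 *: x) -> nu x <= s.
Proof. by move=> s0 As; apply: ge_inf; [apply: gS_lb|]. Qed.

Lemma nu_ge0 x : P x -> 0 <= nu x.
Proof.
move=> Px; apply: lb_le_inf; first by have [s hs] := Aabs Px; exists s.
by move=> s [/ltW].
Qed.

Lemma nu_gt x s : P x -> nu x < s -> A (s^-1 *: x).
Proof.
move=> Px hs; have /inf_lt := hs; case.
  by have [s' hs'] := Aabs Px; exists s'.
move=> s' [s'0 As'] s's.
have s0 : 0 < s by apply: lt_trans s's.
have -> : s^-1 *: x = (s' / s) *: (s'^-1 *: x).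
  by rewrite scalerA mulrAC mulrV ?unitfE ?gt_eqF // mul1r.
apply: Abal => //; rewrite ger0_norm; last by apply: ltW; apply: divr_gt0.
by rewrite ler_pdivrMr // mul1r ltW.
Qed.

Lemma nu_A x : A x -> nu x <= 1.
Proof. by move=> Ax; apply: nu_le => //; rewrite invr1 scale1r. Qed.

Lemma nuD x y : P x -> P y -> nu (x + y) <= nu x + nu y.
Proof.
move=> Px Py; apply/ler_gtP => z hz.
set e := (z - (nu x + nu y)) / 2.
have e0 : 0 < e by rewrite /e divr_gt0 // subr_gt0.
have hx0 := nu_ge0 Px; have hy0 := nu_ge0 Py.
have sx : 0 < nu x + e by lra.
have sy : 0 < nu y + e by lra.
have Ax := nu_gt Px (_ : nu x < nu x + e); have Ay := nu_gt Py (_ : nu y < nu y + e).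
have -> : z = (nu x + e) + (nu y + e) by rewrite /e; field.
apply: nu_le; first lra.
have st0 : 0 < (nu x + e) + (nu y + e) by lra.
have -> : ((nu x + e) + (nu y + e))^-1 *: (x + y) =
   ((nu x + e) / ((nu x + e) + (nu y + e))) *: ((nu x + e)^-1 *: x) +
   ((nu y + e) / ((nu x + e) + (nu y + e))) *: ((nu y + e)^-1 *: y).
  rewrite !scalerA scalerDr; congr (_ *: _ + _ *: _); field; lra.
apply: Aconv; [apply: Ax; lra | apply: Ay; lra |].
rewrite !ger0_norm; first by rewrite -mulrDl divff ?gt_eqF.
  by apply: ltW; apply: divr_gt0.
by apply: ltW; apply: divr_gt0.
Qed.

Lemma nuZ t x : 0 < t -> P x -> nu (t *: x) = t * nu x.
Proof.
move=> t0 Px; have Ptx : P (t *: x) by apply: subspZ.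
apply/eqP; rewrite eq_le; apply/andP; split.
- apply/ler_gtP => z hz.
  have hs : nu x < z / t by rewrite ltr_pdivlMr // mulrC.
  have := nu_gt Px hs => As.
  have -> : z = t * (z / t) by field; rewrite gt_eqF.
  apply: nu_le; first by apply: mulr_gt0 => //; apply: le_lt_trans (nu_ge0 Px) hs.
  by rewrite scalerA invfM mulrAC mulVf ?gt_eqF // mul1r.
- rewrite -ler_pdivlMl //; apply/ler_gtP => z hz.
  move: hz; rewrite ltr_pdivrMl // => hz.
  have := nu_gt Ptx hz => As.
  have z0 : 0 < z.
    by rewrite -(pmulr_rgt0 _ t0); apply: le_lt_trans (nu_ge0 Ptx) hz.
  apply: nu_le => //.
  by move: As; rewrite scalerA invfM mulrAC mulVf ?gt_eqF // mul1r.
Qed.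

Lemma l_nu x : M x -> l x <= nu x.
Proof.
move=> Mx; apply/ler_gtP => s hs.
have s0 : 0 < s by apply: le_lt_trans (nu_ge0 (MP Mx)) hs.
have := lA (subspZ s^-1 sM Mx) (nu_gt (MP Mx) hs).
rewrite (linonZ _ sM lM Mx) -ler_pdivlMl ?invr_gt0 // invrK mulr1; exact.
Qed.

Lemma RHB_set : exists L, [/\ linon P L, (forall x, M x -> L x = l x) &
   (forall x, A x -> `|L x| <= 1)].
Proof.
have [L [hL hLM hLq]] := @RHB_ext R V P M nu l sP sM MP nuD nuZ lM l_nu.
exists L; split=> // x Ax.
have h1 : L x <= 1 by apply: le_trans (nu_A Ax); apply: hLq; apply: AP.
have AN : A (- x) by rewrite -scaleN1r; apply: Abal => //; rewrite normrN normr1.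
have h2 : L (- x) <= 1 by apply: le_trans (nu_A AN); apply: hLq; apply: AP.
rewrite (linonN sP hL (AP Ax)) in h2.
by rewrite ler_norml; apply/andP; split; lra.
Qed.
End RHBset.
Notation Re := complex.Re.
Notation Im := complex.Im.
Section Realify.
Local Open Scope complex_scope.
Variables (R : realType) (V : lmodType R[i]).
Definition Vr : Type := V.
HB.instance Definition _ := GRing.Zmodule.on Vr.
Definition rscale (r : R) (v : Vr) : Vr := (r%:C *: (v : V)).
Lemma rscaleA a b v : rscale a (rscale b v) = rscale (a * b) v.
Proof. by rewrite /rscale scalerA -rmorphM. Qed.
Lemma rscale1 : left_id 1 rscale.
Proof. by move=> v; rewrite /rscale rmorph1 scale1r. Qed.
Lemma rscaleDr : right_distributive rscale +%R.
Proof. by move=> a u v; rewrite /rscale scalerDr. Qed.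
Lemma rscaleDl v : {morph rscale^~ v : a b / a + b}.
Proof. by move=> a b; rewrite /rscale rmorphD scalerDl. Qed.
HB.instance Definition _ := GRing.Zmodule_isLmodule.Build R Vr rscaleA rscale1 rscaleDr rscaleDl.
End Realify.

Section ComplexAux.
Local Open Scope complex_scope.
Variable R : realType.
Lemma ReM_real (a : R) (z : R[i]) : Re (a%:C * z) = a * Re z.
Proof. by case: z => x y /=; rewrite mul0r subr0. Qed.
Lemma Re_sub_i (a b : R) : Re (a%:C - 'i * b%:C) = a.
Proof. by rewrite /= mul0r mulr0 subr0 subr0. Qed.
Lemma norm_realC (a : R) : `|a%:C| = `|a|%:C.
Proof. by rewrite normc_def /= expr0n /= addr0 sqrtr_sqr. Qed.
Lemma realC_le1 (a : R) : (a%:C <= 1) = (a <= 1).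
Proof. by rewrite -lecR. Qed.
Lemma posC (s : R[i]) : 0 < s -> s = (Re s)%:C /\ 0 < Re s.
Proof. by case: s => x y; rewrite ltcE /= => /andP [/eqP -> h]. Qed.
End ComplexAux.

Section HBC.
Local Open Scope complex_scope.
Variables (R : realType) (V : lmodType R[i]) (P M A : V -> Prop) (l : V -> R[i]).
Hypotheses (sP : subsp P) (sM : subsp M) (MP : forall x, M x -> P x)
  (AP : forall x, A x -> P x)
  (Aconv : forall x y (a c : R[i]), A x -> A y -> `|a| + `|c| <= 1 -> A (a *: x + c *: y))
  (Aabs : forall x, P x -> exists s : R[i], 0 < s /\ A (s^-1 *: x))
  (lM : linon M l) (lA : forall x, M x -> A x -> `|l x| <= 1).

Lemma HBC : exists L, [/\ linon P L, (forall x, M x -> L x = l x) &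
   (forall x, A x -> `|L x| <= 1)].
Proof.
have sPr : @subsp R (Vr V) P.
  by split; [exact: sP.1 | move=> a x y Px Py; exact: (sP.2 a%:C x y Px Py)].
have sMr : @subsp R (Vr V) M.
  by split; [exact: sM.1 | move=> a x y Px Py; exact: (sM.2 a%:C x y Px Py)].
have Aconvr : forall (x y : Vr V) (a c : R), A x -> A y -> `|a| + `|c| <= 1 ->
    A (a *: x + c *: y).
  move=> x y a c Ax Ay h; apply: (Aconv Ax Ay).
  by rewrite !norm_realC -rmorphD realC_le1.
have Aabsr : forall x : Vr V, P x -> exists s : R, 0 < s /\ A (s^-1 *: x).
  move=> x Px; have [s [s0 As]] := Aabs Px; have [es rs] := posC s0.
  exists (Re s); split=> //; move: As; rewrite {1}es.
  by rewrite -rmorphV //= unitfE gt_eqF.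
pose lr := fun x : Vr V => Re (l x).
have lMr : @linon R (Vr V) M lr.
  move=> a x y Mx My; rewrite /lr.
  have -> : l (a *: (x : Vr V) + y) = a%:C * l x + l y by apply: lM.
  by rewrite raddfD /= ReM_real.
have lAr : forall x : Vr V, M x -> A x -> lr x <= 1.
  move=> x Mx Ax; have := lA Mx Ax; have := normc_ge_Re (l x) => h1 h2.
  have : `|Re (l x)|%:C <= 1 by apply: le_trans h2.
  by rewrite realC_le1 => /(le_trans (ler_norm _)).
have [Lr [hLr hLrM hLrA]] := @RHB_set R (Vr V) P M A lr sPr sMr MP AP Aconvr Aabsr lMr lAr.
pose L := fun x : V => (Lr x)%:C - 'i * (Lr ('i *: x))%:C.
have Pi : forall x, P x -> P ('i *: x) by move=> x Px; apply: subspZ.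
have LrD : forall x y, P x -> P y -> Lr (x + y) = Lr x + Lr y.
  by move=> x y Px Py; apply: (linonD sPr hLr).
have LrZ : forall (r : R) x, P x -> Lr (r%:C *: x) = r * Lr x.
  by move=> r x Px; apply: (linonZ r sPr hLr).
have LrN : forall x, P x -> Lr (- x) = - Lr x.
  by move=> x Px; apply: (linonN sPr hLr).
have LD : forall x y, P x -> P y -> L (x + y) = L x + L y.
  move=> x y Px Py; rewrite /L scalerDr !LrD //; try by apply: Pi.
  by rewrite !rmorphD /= mulrDr opprD addrACA.
have LR : forall (r : R) x, P x -> L (r%:C *: x) = r%:C * L x.
  move=> r v Pv; rewrite /L scalerA (mulrC 'i r%:C) -scalerA !LrZ //; try by apply: Pi.
  by rewrite !rmorphM /= mulrBr mulrCA.
have LI : forall x, P x -> L ('i *: x) = 'i * L x.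
  move=> v Pv; rewrite /L scalerA.
  have -> : 'i * 'i = -1 :> R[i] by rewrite -expr2 sqr_i.
  rewrite scaleN1r LrN // rmorphN /= mulrBr mulrN opprK mulrA.
  have -> : 'i * 'i = -1 :> R[i] by rewrite -expr2 sqr_i.
  by rewrite mulN1r addrC opprK.
have LZ : forall a x, P x -> L (a *: x) = a * L x.
  move=> a v Pv.
  have Pv1 : P ((Re a)%:C *: v) by apply: subspZ.
  have Pv3 : P ((Im a)%:C *: v) by apply: subspZ.
  have Pv2 : P ('i *: ((Im a)%:C *: v)) by apply: Pi.
  rewrite {1}[a]complexE scalerDl -scalerA (LD _ _ Pv1 Pv2) (LI _ Pv3) !LR //.
  by rewrite mulrA -mulrDl -complexE.
exists L; split.
- move=> a v w Pv Pw; rewrite LD ?LZ //; by apply: subspZ.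
- move=> v Mv; rewrite /L hLrM // hLrM; last by apply: subspZ.
  rewrite /lr (linonZ 'i sM lM Mv) (mulrC 'i (l v)) ReiNIm rmorphN /= mulrN opprK.
  by rewrite [in RHS](complexE (l v)).
- move=> v Av; set z := L v.
  have [->|z0] := eqVneq z 0; first by rewrite normr0.
  pose w := `|z| / z.
  have w1 : `|w| <= 1 by rewrite /w normf_div normr_id divff // normr_eq0.
  have Aw : A (w *: v).
    by have := @Aconv v v w 0 Av Av; rewrite normr0 addr0 scale0r addr0; apply.
  have Lw : L (w *: v) = `|z|.
    by rewrite LZ; [rewrite /w -/z divfK | apply: AP].
  have ReL : forall u, Re (L u) = Lr u by move=> u; rewrite /L Re_sub_i.
  have h := hLrA _ Aw; rewrite -ReL Lw in h.
  have zr : `|z| = (Re `|z|)%:C by rewrite RRe_real // normr_real.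
  by rewrite zr realC_le1; apply: le_trans h; apply: ler_norm.
Qed.
End HBC.

Lemma HBK (R : realType) (b : bool) (V : lmodType (RC R b)) (P M A : V -> Prop)
  (l : V -> RC R b) :
  subsp P -> subsp M -> (forall x, M x -> P x) -> (forall x, A x -> P x) ->
  (forall x y (a c : RC R b), A x -> A y -> `|a| + `|c| <= 1 -> A (a *: x + c *: y)) ->
  (forall x, P x -> exists s : RC R b, 0 < s /\ A (s^-1 *: x)) ->
  linon M l -> (forall x, M x -> A x -> `|l x| <= 1) ->
  exists L, [/\ linon P L, (forall x, M x -> L x = l x) &
   (forall x, A x -> `|L x| <= 1)].
Proof.
case: b V P M A l => V P M A l sP sM MP AP Ac Aa lM lA.
- have lA' : forall x, M x -> A x -> l x <= 1.
    by move=> x Mx Ax; apply: le_trans (lA x Mx Ax); apply: ler_norm.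
  exact: (@RHB_set R V P M A l sP sM MP AP Ac Aa lM lA').
- exact: (@HBC R V P M A l sP sM MP AP Ac Aa lM lA).
Qed.
Lemma archiR (R : realType) (eta : R) : 0 < eta -> exists N : nat, ((N.+1)%:R : R)^-1 < eta.
Proof.
move=> e0; exists (Num.bound eta^-1).
have ei : 0 <= eta^-1 by rewrite invr_ge0 ltW.
have h := Num.Theory.archi_boundP ei.
suff : ((Num.bound eta^-1).+1%:R)^-1 < eta^-1^-1 by rewrite invrK.
rewrite ltf_pV2 ?posrE ?ltr0Sn ?invr_gt0 //.
by apply: lt_le_trans h _; rewrite ler_nat.
Qed.

Lemma archiRC (R : realType) (b : bool) (eta : RC R b) : 0 < eta ->
  exists N : nat, ((N.+1)%:R : RC R b)^-1 < eta.
Proof.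
case: b eta => eta e0; first exact: archiR.
have [-> r0] := posC e0; have [N hN] := archiR r0; exists N.
by rewrite -(rmorph_nat (real_complex R)) -rmorphV ?unitfE ?pnatr_eq0 //= ltcR.
Qed.
Section Main.
Variables (R : realType) (b : bool) (W : wdata (RC R b))
  (E : lmodType (RC R b)) (p : nat -> E -> RC R b)
  (domK : Mset W -> (Omega W -> (RC R b)^o) -> Prop)
  (TK : Mset W -> (Omega W -> (RC R b)^o) -> X W -> (RC R b)^o)
  (domE : Mset W -> (Omega W -> E) -> Prop)
  (TE : Mset W -> (Omega W -> E) -> X W -> E)
  (U : Mset W -> X W -> Prop).
Hypotheses (HW : wdata_ok W) (HE : frechet p) (HlinK : lin_ops domK TK)
  (Hcons : consistent domK TK p domE TE) (HMontel : semi_Montel domK TK)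
  (HU : set_of_uniqueness domK TK U).
Variable (f : Mset W -> X W -> E).
Hypothesis (Hf : FVE'U_sb domK TK p U f).

Local Notation K := (RC R b).
Local Notation FT := (Omega W -> K^o).
Local Notation FVK := (FVK domK TK).
Local Notation bndK := (bndK TK).
Local Notation dualFV := (dualFV domK TK).
Local Notation dualE := (dualE p).
Local Notation polarB := (polarB p).
Local Notation sball := (sball domK TK).

Lemma Ml_top l m : Ml W l m -> Mtop W m.
Proof. by case: HW => _ _ _ _ [h _ _ _ _] Hm; apply/h; exists l. Qed.
Lemma emb_omega l m x : Ml W l m -> omega W m (emb W x).
Proof. by case: HW => _ _ _ _ [_ _ _ _ [h _ _ _]] /Ml_top Hm; apply: h. Qed.
Lemma wnu_ge0 j l m x : 0 <= nu W j l m x.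
Proof. by case: HW => _ _ _ _ [_ _ _ _ [_ _ h _]]. Qed.

Lemma faddE (g h : FT) : fadd g h = g + h. Proof. by []. Qed.
Lemma fscaleE (a : K) (g : FT) : fscale a g = a *: g. Proof. by []. Qed.

Lemma subE (g h : FT) : fadd g (fscale (-1) h) = g - h.
Proof. by apply: funext => x; rewrite /fadd /fscale scaleN1r. Qed.

Lemma TK0 m y : omega W m y -> TK m 0 y = 0.
Proof.
move=> om; case: (HlinK m) => d0 /(_ 1 _ _ d0 d0) [_ /(_ y om)].
have -> : fadd (fscale 1 (fzero _)) (fzero _) = (0 : FT).
  by apply: funext => x; rewrite /fadd /fscale /fzero scale1r addr0.
rewrite scale1r => h; apply: (addIr (TK m 0 y)); rewrite add0r.
exact: (esym h).
Qed.

Lemma domK_lin m a (g h : FT) : domK m g -> domK m h -> domK m (a *: g + h).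
Proof. by move=> dg dh; case: (HlinK m) => _ /(_ a _ _ dg dh) []. Qed.

Lemma TK_lin m a (g h : FT) y : domK m g -> domK m h -> omega W m y ->
  TK m (a *: g + h) y = a * TK m g y + TK m h y.
Proof. by move=> dg dh om; case: (HlinK m) => _ /(_ a _ _ dg dh) [_ /(_ y om)]. Qed.

Lemma FVK0 : FVK 0.
Proof.
split; first by move=> m; case: (HlinK m).
  by move=> m _ y om; apply: TK0.
move=> j l [] ; exists 0 => x m Hm.
by rewrite (TK0 (emb_omega x Hm)) /qK normr0 mul0r.
Qed.

Lemma FVK_lin a (g h : FT) : FVK g -> FVK h -> FVK (a *: g + h).
Proof.
move=> [dg zg bg] [dh zh bh]; split.
- by move=> m; apply: domK_lin.
- by move=> m Hm y om; rewrite TK_lin // zg // zh // mulr0 addr0.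
- move=> j l [].
  have [b1 hb1] := bg j l tt; have [b2 hb2] := bh j l tt.
  exists (`|a| * b1 + b2) => x m Hm.
  rewrite TK_lin //; last exact: emb_omega Hm.
  rewrite /qK; apply: le_trans (_ : (`|a| * `|TK m g (emb W x)| + `|TK m h (emb W x)|)
      * nu W j l m x <= _).
    by apply: ler_wpM2r; [apply: wnu_ge0 | rewrite -normrM; apply: ler_normD].
  rewrite mulrDl -mulrA; apply: lerD; last exact: hb2.
  by apply: ler_wpM2l => //; apply: hb1.
Qed.

Lemma FVKZ a (g : FT) : FVK g -> FVK (a *: g).
Proof. by move=> Fg; rewrite -[a *: g]addr0; apply: FVK_lin => //; apply: FVK0. Qed.
Lemma FVKD (g h : FT) : FVK g -> FVK h -> FVK (g + h).
Proof. by move=> Fg Fh; rewrite -[g]scale1r; apply: FVK_lin. Qed.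
Lemma FVKB (g h : FT) : FVK g -> FVK h -> FVK (g - h).
Proof. by move=> Fg Fh; rewrite addrC -scaleN1r; apply: FVK_lin. Qed.
Lemma FVK_comb a c (g h : FT) : FVK g -> FVK h -> FVK (a *: g + c *: h).
Proof. by move=> Fg Fh; apply: FVK_lin => //; apply: FVKZ. Qed.

Lemma bnd_mono i (g : FT) d d' : bndK i g d -> d <= d' -> bndK i g d'.
Proof. by move=> h dd x m Hm; apply: le_trans (h x m Hm) dd. Qed.

Lemma bnd_ge0 i (g : FT) d : bndK i g d -> 0 <= d.
Proof.
case: HW => [[x] _ _ Hl _] h; have [m Hm] := Hl i.2.
apply: le_trans (h x m Hm); apply: mulr_ge0; first by apply: normr_ge0.
exact: wnu_ge0.
Qed.

Lemma dual_lin y a (g h : FT) : dualFV y -> FVK g -> FVK h -> y (a *: g + h) = a * y g + y h.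
Proof. by move=> [hl _] Fg Fh; apply: hl. Qed.
Lemma dual0 y : dualFV y -> y 0 = 0.
Proof.
move=> dy; have := dual_lin 1 dy FVK0 FVK0; rewrite scaler0 addr0 mul1r => h.
by apply: (addIr (y 0)); rewrite add0r -h.
Qed.
Lemma dualZ y a (g : FT) : dualFV y -> FVK g -> y (a *: g) = a * y g.
Proof. by move=> dy Fg; rewrite -[a *: g]addr0 dual_lin ?dual0 ?addr0 //; apply: FVK0. Qed.
Lemma dualD y (g h : FT) : dualFV y -> FVK g -> FVK h -> y (g + h) = y g + y h.
Proof. by move=> dy Fg Fh; rewrite -{1}[g]scale1r dual_lin // mul1r. Qed.
Lemma dualB y (g h : FT) : dualFV y -> FVK g -> FVK h -> y (g - h) = y g - y h.
Proof.
move=> dy Fg Fh; rewrite addrC -scaleN1r dual_lin // mulN1r addrC //.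
Qed.

Lemma real_mul_le (C e : K) (z : K) : `|z| <= C * e -> 0 <= e -> C * e <= `|C| * e.
Proof.
move=> h e0; have h0 : 0 <= C * e by apply: le_trans h.
by rewrite -[leLHS](ger0_norm h0) normrM (ger0_norm e0).
Qed.

Lemma open_dual (d : FT -> K) c r : dualFV d ->
  openFV domK TK (fun g => FVK g /\ `|d g - c| < r).
Proof.
move=> dd g0 Fg0 [_ hg0]; case: (dd) => _ [s [C hC]].
set r' := r - `|d g0 - c|.
have r'0 : 0 < r' by rewrite /r' subr_gt0.
have C1 : 0 < `|C| + 1 by apply: ltr_wpDl.
set eps := r' / (`|C| + 1).
have e0 : 0 < eps by apply: divr_gt0.
exists s, eps; split=> // g [Fg hb]; split=> //.
have Fd : FVK (g - g0) by apply: FVKB.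
have hb' : forall i, List.In i s -> bndK i (g - g0) eps.
  move=> i /hb [d1 [d1e]]; rewrite subE => h; apply: bnd_mono h _; exact: ltW.
have h1 := hC _ Fd _ hb'.
rewrite (dualB dd Fg Fg0) in h1.
have -> : d g - c = (d g - d g0) + (d g0 - c) by rewrite addrA subrK.
apply: le_lt_trans (ler_normD _ _) _.
have h2 : `|d g - d g0| <= `|C| * eps by apply: le_trans h1 (real_mul_le h1 (ltW e0)).
have h3 : `|C| * eps < r'.
  have -> : r' = (`|C| + 1) * eps by rewrite /eps mulrC divfK ?gt_eqF.
  by rewrite ltr_pM2r // ltrDl.
have h4 : `|d g - d g0| < r' by apply: le_lt_trans h2 h3.
by rewrite -(subrK (`|d g0 - c|) r) ltrD2r.
Qed.
Lemma domK0 m : domK m 0. Proof. by case: (HlinK m). Qed.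
Lemma domKZ m a (g : FT) : domK m g -> domK m (a *: g).
Proof. by move=> dg; rewrite -[a *: g]addr0; apply: domK_lin => //; apply: domK0. Qed.
Lemma TK_comb m a c (g1 g2 : FT) y : FVK g1 -> FVK g2 -> omega W m y ->
  TK m (a *: g1 + c *: g2) y = a * TK m g1 y + c * TK m g2 y.
Proof.
move=> [d1 _ _] [d2 _ _] om; rewrite TK_lin //; last by apply: domKZ.
by rewrite -[c *: g2]addr0 TK_lin ?TK0 ?addr0 //; apply: domK0.
Qed.

Lemma bndK0 i : bndK i 0 0.
Proof. by move=> x m Hm; rewrite (TK0 (emb_omega x Hm)) /qK normr0 mul0r. Qed.

Lemma sub_closure (A : FT -> Prop) g : (forall h, A h -> FVK h) -> A g ->
  closureFV domK TK A g.
Proof.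
move=> AF Ag; split; first by apply: AF.
move=> s eps e0; exists g; split=> //; split; first by apply: AF.
by move=> i _; exists 0; split=> //; rewrite subE subrr; apply: bndK0.
Qed.

Lemma bnd_comb i a c (g1 g2 : FT) d1 d2 : FVK g1 -> FVK g2 ->
  bndK i g1 d1 -> bndK i g2 d2 -> bndK i (a *: g1 + c *: g2) (`|a| * d1 + `|c| * d2).
Proof.
move=> F1 F2 h1 h2 x m Hm.
have om := emb_omega x Hm.
rewrite /qK TK_comb //.
apply: le_trans (_ : (`|a| * `|TK m g1 (emb W x)| + `|c| * `|TK m g2 (emb W x)|)
      * nu W i.1 i.2 m x <= _).
  by apply: ler_wpM2r; [apply: wnu_ge0 | rewrite -!normrM; apply: ler_normD].
rewrite mulrDl -!mulrA; apply: lerD; apply: ler_wpM2l => //; [apply: h1|apply: h2] => //.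
Qed.

Lemma comb0 a c : fadd (fscale a (fzero _)) (fscale c (fzero _)) = (0 : FT).
Proof. by apply: funext => x; rewrite /fadd /fscale /fzero !scaler0 addr0. Qed.

Lemma closure_absconv (A : FT -> Prop) : (forall h, A h -> FVK h) -> abs_convex A ->
  abs_convex (closureFV domK TK A).
Proof.
move=> AF Ac g1 g2 a c [F1 c1] [F2 c2] hac; split; first by apply: FVK_comb.
move=> s eps e0.
have e2 : 0 < eps / 2 by apply: divr_gt0.
have [h1 [A1 [Fh1 b1]]] := c1 s _ e2; have [h2 [A2 [Fh2 b2]]] := c2 s _ e2.
exists (a *: h1 + c *: h2); split; first by apply: Ac.
split; first by apply: FVK_comb.
move=> i si; have [d1 [d1e hd1]] := b1 i si; have [d2 [d2e hd2]] := b2 i si.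
rewrite subE in hd1; rewrite subE in hd2; rewrite subE.
have -> : (a *: h1 + c *: h2) - (fadd (fscale a g1) (fscale c g2))
   = a *: (h1 - g1) + c *: (h2 - g2).
  by rewrite !scalerBr opprD addrACA.
exists (`|a| * d1 + `|c| * d2); split; last first.
  by apply: bnd_comb => //; apply: FVKB.
have d10 := bnd_ge0 hd1; have d20 := bnd_ge0 hd2.
apply: le_lt_trans (_ : (`|a| + `|c|) * (eps / 2) < eps).
  rewrite mulrDl; apply: lerD; apply: ler_wpM2l => //; exact: ltW.
apply: le_lt_trans (_ : 1 * (eps / 2) < eps).
  by apply: ler_wpM2r => //; apply: ltW.
by rewrite mul1r ltr_pdivrMr // ltr_pMr // ltr1n.
Qed.

Definition An n (g : FT) := exists e', polarB n e' /\ FVK g /\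
  forall m y, U m y -> TK m g y = e' (f m y).
Definition Kn n := closureFV domK TK (An n).

Lemma An_FVK n g : An n g -> FVK g. Proof. by case=> e' [_ []]. Qed.
Lemma Kn_FVK n g : Kn n g -> FVK g. Proof. by case. Qed.
Lemma An_Kn n g : An n g -> Kn n g.
Proof. by move=> Ag; apply: sub_closure => //; apply: An_FVK. Qed.
Lemma Kn_compact n : compactFV domK TK (Kn n).
Proof. exact: HMontel (Hf.2 n). Qed.

Lemma pE : [/\ (forall n x, 0 <= p n x),
      (forall n x y, p n (x + y) <= p n x + p n y),
      (forall n (a : K) x, p n (a *: x) = `|a| * p n x),
      (forall n x, p n x <= p n.+1 x) &
      ((forall x, (forall n, p n x = 0) -> x = 0) /\
      (forall u : nat -> E,
         (forall n eps, 0 < eps -> exists N, forall i k, (N <= i)%N -> (N <= k)%N ->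
            p n (u i - u k) < eps) ->
         exists x, forall n eps, 0 < eps -> exists N, forall i, (N <= i)%N ->
            p n (u i - x) < eps))].
Proof. exact: HE. Qed.

Lemma p_ge0 n x : 0 <= p n x. Proof. by case: pE => h _ _ _ _; apply: h. Qed.
Lemma pD n x y : p n (x + y) <= p n x + p n y. Proof. by case: pE => _ h _ _ _; apply: h. Qed.
Lemma pZ n a x : p n (a *: x) = `|a| * p n x. Proof. by case: pE => _ _ h _ _; apply: h. Qed.
Lemma p_mono n k x : (n <= k)%N -> p n x <= p k x.
Proof.
move=> /subnK <-; elim: (k - n)%N => [|j IH]; first by rewrite add0n.
by apply: le_trans IH _; case: pE => _ _ _ h _; rewrite addSn; apply: h.
Qed.
Lemma p0 n : p n 0 = 0. Proof. by rewrite -(scale0r 0) pZ normr0 mul0r. Qed.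
Lemma pN n x : p n (- x) = p n x. Proof. by rewrite -scaleN1r pZ normrN normr1 mul1r. Qed.

Lemma dualE_lin e' a x y : dualE e' -> e' (a *: x + y) = a * e' x + e' y.
Proof. by case=> h _; apply: h. Qed.
Lemma dualE0 e' : dualE e' -> e' 0 = 0.
Proof.
move=> de; have := dualE_lin 1 0 0 de; rewrite scaler0 addr0 mul1r => h.
by apply: (addIr (e' 0)); rewrite add0r -h.
Qed.
Lemma dualEZ e' a x : dualE e' -> e' (a *: x) = a * e' x.
Proof. by move=> de; rewrite -[a *: x]addr0 dualE_lin // dualE0 // addr0. Qed.
Lemma dualED e' x y : dualE e' -> e' (x + y) = e' x + e' y.
Proof. by move=> de; rewrite -{1}[x]scale1r dualE_lin // mul1r. Qed.
Lemma dualEB e' x y : dualE e' -> e' (x - y) = e' x - e' y.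
Proof. by move=> de; rewrite dualED // -scaleN1r dualEZ // mulN1r. Qed.

Lemma polar_le n e' x : polarB n e' -> `|e' x| <= p n x.
Proof.
move=> [de he]; apply/ler_gtP => z hz.
have z0 : 0 < z by apply: le_lt_trans (p_ge0 n x) hz.
have : p n (z^-1 *: x) < 1.
  by rewrite pZ normfV (gtr0_norm z0) ltr_pdivrMl // mulr1.
move=> /he; rewrite dualEZ // normrM normfV (gtr0_norm z0).
by rewrite ler_pdivrMl // mulr1.
Qed.

Lemma polar_mono n k e' : (n <= k)%N -> polarB n e' -> polarB k e'.
Proof.
move=> nk [de he]; split=> // x hx; apply: he.
by apply: le_lt_trans hx; apply: p_mono.
Qed.

Lemma An_mono n k g : (n <= k)%N -> An n g -> An k g.
Proof. by move=> nk [e' [pe h]]; exists e'; split=> //; apply: polar_mono pe. Qed.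

Lemma polar0 n : polarB n (fun _ => 0).
Proof.
split; last by move=> x _; rewrite normr0.
split; first by move=> a x y; rewrite mulr0 addr0.
by exists 0%N, 0 => x; rewrite normr0 mul0r.
Qed.

Lemma An0 n : An n 0.
Proof.
exists (fun _ => 0); split; first exact: polar0.
split; first exact: FVK0.
by move=> m y Um; apply: TK0; case: HU => h _; apply: h.
Qed.

Lemma U_omega m y : U m y -> omega W m y. Proof. by case: HU => h _; apply: h. Qed.
Lemma U_dual m y : U m y -> dualFV (TKx TK m y). Proof. by case: HU => _ [h _]; apply: h. Qed.
Lemma U_uniq (g : FT) : FVK g -> (forall m y, U m y -> TK m g y = 0) -> g = 0.
Proof. by move=> Fg h; apply: funext => x; case: HU => _ [_ hu]; apply: hu. Qed.

Lemma An_absconv n : abs_convex (An n).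
Proof.
move=> g1 g2 a c [e1 [p1 [F1 h1]]] [e2 [p2 [F2 h2]]] hac.
exists (fun x => a * e1 x + c * e2 x); split; last split.
- split.
    split; first by move=> a' x y; rewrite !dualE_lin; [ring| case: p2 | case: p1].
    exists n, (`|a| + `|c|) => x.
    apply: le_trans (ler_normD _ _) _; rewrite !normrM mulrDl.
    by apply: lerD; apply: ler_wpM2l => //; apply: polar_le.
  move=> x hx; apply: le_trans (ler_normD _ _) _; apply: le_trans hac; rewrite !normrM.
  apply: lerD; rewrite -[leRHS]mulr1; apply: ler_wpM2l => //; [case: p1|case: p2]=> _; apply.
  + done.
  + done.
- exact: FVK_comb.
- move=> m y Um; have om := U_omega Um.
  by rewrite (TK_comb _ _ F1 F2 om) h1 ?h2.
Qed.

Lemma Kn_absconv n : abs_convex (Kn n).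
Proof. by apply: closure_absconv; [apply: An_FVK | apply: An_absconv]. Qed.
Lemma Kn0 n : Kn n 0. Proof. by apply: An_Kn; apply: An0. Qed.
Lemma Kn_bal n a g : Kn n g -> `|a| <= 1 -> Kn n (a *: g).
Proof.
move=> Kg ha; have := @Kn_absconv n g 0 a 0 Kg (Kn0 n).
rewrite normr0 addr0 => /(_ ha).
have -> : fadd (fscale a g) (fscale 0 (0 : FT)) = a *: g.
  by apply: funext => x; rewrite /fadd /fscale scale0r addr0.
done.
Qed.
Fixpoint pick_pts (s : seq (option (FT * (Mset W * X W)))) : seq (Mset W * X W) :=
  match s with
  | [::] => [::]
  | None :: s' => pick_pts s'
  | Some ht :: s' => if `[< U ht.2.1 ht.2.2 >] then ht.2 :: pick_pts s' else pick_pts s'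
  end.

Lemma pick_ptsU s t : List.In t (pick_pts s) -> U t.1 t.2.
Proof.
elim: s => [//|[[h t']|] s IH] /=; last exact: IH.
case: asboolP => Ut' /=; last exact: IH.
by case=> [<-|]; [|apply: IH].
Qed.

Lemma pick_ptsIn s ht : List.In (Some ht) s -> U ht.2.1 ht.2.2 -> List.In ht.2 (pick_pts s).
Proof.
elim: s => [//|[[h t']|] s IH] /=.
- case: asboolP => Ut' [[<-]|hs] Uht /=; [by left| by right; apply: IH| |by apply: IH].
  by move: Ut'; rewrite -/(U _ _).
- by case=> [//|hs]; apply: IH.
Qed.

Lemma sep_compact (C : FT -> Prop) (y : FT -> K) (eps : K) :
  compactFV domK TK C -> dualFV y -> 0 < eps ->
  exists pts : seq (Mset W * X W), (forall t, List.In t pts -> U t.1 t.2) /\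
    forall g, C g -> (forall t, List.In t pts -> TK t.1 g t.2 = 0) -> `|y g| < eps.
Proof.
move=> [CF Ccov] dy e0.
pose Vf (i : option (FT * (Mset W * X W))) : FT -> Prop :=
  match i with
  | None => fun g => FVK g /\ `|y g - 0| < eps
  | Some ht => fun g => FVK g /\ U ht.2.1 ht.2.2 /\ TK ht.2.1 ht.1 ht.2.2 != 0 /\
      `|TK ht.2.1 g ht.2.2 - TK ht.2.1 ht.1 ht.2.2| < `|TK ht.2.1 ht.1 ht.2.2| / 2
  end.
have Vopen : forall i, openFV domK TK (Vf i).
  case=> [[h [m x]]|] /=; last exact: open_dual.
  move=> g0 Fg0 [_ [Um [nz hlt]]].
  have := @open_dual (TKx TK m x) (TK m h x) (`|TK m h x| / 2) (U_dual Um) g0 Fg0.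
  case=> [|s [e [e0' hs]]]; first by split.
  exists s, e; split=> // g /hs [Fg hg]; by split.
have Vcov : forall g, C g -> exists i, Vf i g.
  move=> g Cg; have Fg := CF g Cg.
  have [hy|hy] := pselect (`|y g| < eps); first by exists None; rewrite /= subr0.
  have [[m [x [Um nz]]]|none] := pselect (exists m x, U m x /\ TK m g x != 0).
    exists (Some (g, (m, x))) => /=; split=> //; split=> //; split=> //.
    by rewrite subrr normr0 divr_gt0 // normr_gt0.
  exfalso; apply: hy.
  have -> : g = 0.
    apply: U_uniq => // m x Um; case: (eqVneq (TK m g x) 0) => // nz.
    by exfalso; apply: none; exists m, x.
  by rewrite (dual0 dy) normr0.
have [s hs] := Ccov _ Vf Vopen Vcov.
exists (pick_pts s); split; first exact: pick_ptsU.
move=> g Cg hz; have [[[h t]|] [si Vg]] := hs g Cg; last by move: Vg => /= [_]; rewrite subr0.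
move: Vg => /= [Fg [Ut [nz hlt]]].
rewrite hz in hlt; last exact: (pick_ptsIn si Ut).
exfalso; move: hlt; rewrite sub0r normrN.
have hpos : 0 < `|TK t.1 h t.2| by rewrite normr_gt0.
rewrite ltr_pdivlMr // => hh.
have h2 : `|TK t.1 h t.2| < `|TK t.1 h t.2| * 2 by rewrite ltr_pMr // ltr1n.
by have := lt_trans hh h2; rewrite ltxx.
Qed.

Lemma zip_In2 (A B : Type) (cs : seq A) (ps : seq B) ct :
  List.In ct (zip cs ps) -> List.In ct.2 ps.
Proof.
elim: ps cs => [|a ps IH] [|c cs] //=; case=> [<-|h]; [by left|right; exact: IH h].
Qed.

Lemma zip_sum_pi (V : lmodType K) (P : V -> Prop) (A : Type) (F : A -> V -> K)
  (g g1 : V) (t : K) : subsp P -> P g -> P g1 -> forall (ps : seq A) (cs : seq K),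
  (forall a, List.In a ps -> linon P (F a)) ->
  \sum_(ct <- zip cs ps) ct.1 * F ct.2 (g - t *: g1) =
  \sum_(ct <- zip cs ps) ct.1 * F ct.2 g - t * \sum_(ct <- zip cs ps) ct.1 * F ct.2 g1.
Proof.
move=> sP Pg Pg1; elim=> [|a ps IH] [|c cs] hl /=; rewrite ?big_nil ?mulr0 ?subr0 //.
rewrite !big_cons IH; last by move=> a' h; apply: hl; right.
have la : linon P (F a) by apply: hl; left.
rewrite (linonB sP la) //; last by apply: subspZ.
by rewrite (linonZ _ sP la) //; ring.
Qed.

Lemma LA (V : lmodType K) (P : V -> Prop) (A : Type) (ps : seq A) : subsp P ->
  forall (F : A -> V -> K) (phi : V -> K),
  (forall a, List.In a ps -> linon P (F a)) -> linon P phi ->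
  (forall g, P g -> (forall a, List.In a ps -> F a g = 0) -> phi g = 0) ->
  exists cs : seq K, forall g, P g -> phi g = \sum_(ct <- zip cs ps) ct.1 * F ct.2 g.
Proof.
move=> sP; elim: ps => [|a ps IH] F phi hF hphi hz.
  by exists [::] => g Pg; rewrite big_nil; apply: hz.
have la : linon P (F a) by apply: hF; left.
have [[g0 [Pg0 nz]]|none] := pselect (exists g0, P g0 /\ F a g0 != 0).
- pose g1 := (F a g0)^-1 *: g0.
  have Pg1 : P g1 by apply: subspZ.
  have Fg1 : F a g1 = 1 by rewrite /g1 (linonZ _ sP la) // mulVf.
  pose pi g := g - F a g *: g1.
  have Ppi : forall g, P g -> P (pi g).
    by move=> g Pg; apply: subspB => //; apply: subspZ.
  have pilin : forall c g h, P g -> P h -> pi (c *: g + h) = c *: pi g + pi h.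
    move=> c g h Pg Ph; rewrite /pi la // scalerDl -scalerA scalerBr.
    by rewrite opprD addrACA.
  have hF' : forall a', List.In a' ps -> linon P (fun g => F a' (pi g)).
    move=> a' ia c g h Pg Ph /=; rewrite pilin //.
    by apply: (hF a' (or_intror ia)); apply: Ppi.
  have hphi' : linon P (fun g => phi (pi g)).
    by move=> c g h Pg Ph /=; rewrite pilin //; apply: hphi; apply: Ppi.
  have hz' : forall g, P g -> (forall a', List.In a' ps -> F a' (pi g) = 0) -> phi (pi g) = 0.
    move=> g Pg h; apply: hz; first exact: Ppi.
    move=> a' [<-|ia]; last exact: h.
    by rewrite /pi (linonB sP la) //; [rewrite (linonZ _ sP la) // Fg1 mulr1 subrr | apply: subspZ].
  have [cs hcs] := IH _ _ hF' hphi' hz'.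
  exists ((phi g1 - \sum_(ct <- zip cs ps) ct.1 * F ct.2 g1) :: cs) => g Pg.
  have eg : g = pi g + F a g *: g1 by rewrite /pi subrK.
  rewrite [in LHS]eg (linonD sP hphi (Ppi _ Pg)); last by apply: subspZ.
  rewrite (linonZ _ sP hphi) //; have := hcs _ Pg; rewrite /= => ->; rewrite /pi.
  rewrite (@zip_sum_pi V P A F g g1 (F a g) sP Pg Pg1 ps cs); last by move=> a' ia; apply: hF; right.
  rewrite /= big_cons /=; ring.
- have hz' : forall g, P g -> (forall a', List.In a' ps -> F a' g = 0) -> phi g = 0.
    move=> g Pg h; apply: hz => // a' [<-|ia]; last exact: h.
    case: (eqVneq (F a g) 0) => // nz; exfalso; apply: none; by exists g.
  have [cs hcs] := IH F phi (fun a' ia => hF a' (or_intror ia)) hphi hz'.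
  exists (0 :: cs) => g Pg; rewrite /= big_cons /= mul0r add0r; exact: hcs.
Qed.
Definition evd (ds : seq (K * (Mset W * X W))) (g : FT) : K :=
  \sum_(ct <- ds) ct.1 * TK ct.2.1 g ct.2.2.

Lemma evd_lin ds a (g h : FT) : (forall ct, List.In ct ds -> U ct.2.1 ct.2.2) ->
  FVK g -> FVK h -> evd ds (a *: g + h) = a * evd ds g + evd ds h.
Proof.
move=> hU Fg Fh; rewrite /evd; elim: ds hU => [|ct ds IH] hU.
  by rewrite !big_nil mulr0 addr0.
rewrite !big_cons IH; last by move=> c hc; apply: hU; right.
case: Fg => [dg _ _]; case: Fh => [dh _ _].
rewrite TK_lin //; last by apply: U_omega; apply: hU; left.
ring.
Qed.

Lemma density n (y : FT -> K) (eps : K) : dualFV y -> 0 < eps ->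
  exists ds : seq (K * (Mset W * X W)), (forall ct, List.In ct ds -> U ct.2.1 ct.2.2) /\
    forall g, Kn n g -> `|y g - evd ds g| <= eps.
Proof.
move=> dy e0.
have [pts [ptsU hsep]] := sep_compact (Kn_compact n) dy e0.
pose P (g : FT) := exists s : K, 0 < s /\ Kn n (s^-1 *: g).
have PF : forall g, P g -> FVK g.
  move=> g [s [s0 Ks]]; have := FVKZ s (Kn_FVK Ks).
  by rewrite scalerA divff ?gt_eqF // scale1r.
have KP : forall g, Kn n g -> P g.
  by move=> g Kg; exists 1; rewrite invr1 scale1r; split.
have sP : subsp P.
  split; first by apply: KP; apply: Kn0.
  move=> a x z [sx [sx0 Kx]] [sz [sz0 Kz]].
  have s0 : 0 < `|a| * sx + sz by apply: ltr_wpDl sz0; apply: mulr_ge0 => //; apply: ltW.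
  exists (`|a| * sx + sz); split=> //.
  have := @Kn_absconv n _ _ (a * sx / (`|a| * sx + sz)) (sz / (`|a| * sx + sz)) Kx Kz.
  have -> : fadd (fscale (a * sx / (`|a| * sx + sz)) (sx^-1 *: x))
      (fscale (sz / (`|a| * sx + sz)) (sz^-1 *: z)) = (`|a| * sx + sz)^-1 *: (a *: x + z).
    rewrite !fscaleE faddE scalerDr !scalerA; congr (_ *: _ + _ *: _).
    - by rewrite mulrAC mulfK ?gt_eqF // mulrC.
    - by rewrite mulrAC mulfV ?gt_eqF // mul1r.
  apply; rewrite !normrM !normfV (gtr0_norm s0) (gtr0_norm sx0) (gtr0_norm sz0).
  by rewrite -mulrDl divff ?gt_eqF.
pose M (g : FT) := P g /\ forall t, List.In t pts -> TK t.1 g t.2 = 0.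
have sM : subsp M.
  split; first by split; [apply: sP.1 | move=> t it; apply: TK0; apply: U_omega; apply: ptsU].
  move=> a x z [Px hx] [Pz hz]; split; first by apply: sP.2.
  move=> t it; have [dx _ _] := PF _ Px; have [dz _ _] := PF _ Pz.
  by rewrite TK_lin ?hx ?hz ?mulr0 ?addr0 //; apply: U_omega; apply: ptsU.
have MP : forall g, M g -> P g by move=> g [].
have Aconv : forall x z (a c : K), Kn n x -> Kn n z -> `|a| + `|c| <= 1 ->
    Kn n (a *: x + c *: z).
  by move=> x z a c Kx Kz h; apply: Kn_absconv.
have Aabs : forall g, P g -> exists s : K, 0 < s /\ Kn n (s^-1 *: g) by [].
pose l (g : FT) := y g / eps.
have lM : linon M l.
  move=> a x z [Px _] [Pz _]; rewrite /l dual_lin //; try exact: PF.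
  by rewrite mulrDl mulrA.
have lA : forall g, M g -> Kn n g -> `|l g| <= 1.
  move=> g [Pg hg] Kg; rewrite /l normrM normfV (gtr0_norm e0) ler_pdivrMr // mul1r.
  by apply: ltW; apply: hsep.
have [L [hL hLM hLA]] := HBK sP sM MP KP Aconv Aabs lM lA.
pose phi (g : FT) := y g - eps * L g.
have hphi : linon P phi.
  move=> a x z Px Pz; rewrite /phi hL // dual_lin //; try exact: PF.
  ring.
have hF : forall t, List.In t pts -> linon P (fun g : FT => TK t.1 g t.2).
  move=> t it a x z Px Pz /=; have [dx _ _] := PF _ Px; have [dz _ _] := PF _ Pz.
  by rewrite TK_lin //; apply: U_omega; apply: ptsU.
have hz : forall g, P g -> (forall t, List.In t pts -> TK t.1 g t.2 = 0) -> phi g = 0.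
  move=> g Pg h; rewrite /phi hLM; last by split.
  by rewrite /l mulrC divfK ?gt_eqF // subrr.
have [cs hcs] := LA sP hF hphi hz.
exists (zip cs pts); split.
  by move=> ct /zip_In2 /ptsU.
move=> g Kg; rewrite /evd -(hcs g (KP _ Kg)) /phi opprB addrC subrK.
rewrite normrM (gtr0_norm e0) -[leRHS]mulr1 ler_wpM2l //; first exact: ltW.
exact: hLA.
Qed.
Lemma polar_le' n (e' : E -> K) :
  (forall a x y, e' (a *: x + y) = a * e' x + e' y) ->
  (forall x, p n x < 1 -> `|e' x| <= 1) -> forall x, `|e' x| <= p n x.
Proof.
move=> hl he x; apply/ler_gtP => z hz.
have z0 : 0 < z by apply: le_lt_trans (p_ge0 n x) hz.
have e0 : e' 0 = 0.
  have := hl 1 0 0; rewrite scaler0 addr0 mul1r => h.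
  by apply: (addIr (e' 0)); rewrite add0r -h.
have : p n (z^-1 *: x) < 1.
  by rewrite pZ normfV (gtr0_norm z0) ltr_pdivrMl // mulr1.
move=> /he; rewrite -[z^-1 *: x]addr0 hl e0 addr0 normrM normfV (gtr0_norm z0).
by rewrite ler_pdivrMl // mulr1.
Qed.

Lemma norming n z : exists e', polarB n e' /\ e' z = p n z.
Proof.
case: (eqVneq (p n z) 0) => [pz0|pz].
  by exists (fun _ => 0); split; [exact: polar0 | rewrite pz0].
have z0 : z != 0 by apply: contra pz => /eqP ->; rewrite p0.
pose M x := exists t : K, x = t *: z.
have uniq : forall t t', t *: z = t' *: z -> t = t'.
  move=> t t' e; apply/eqP; rewrite -subr_eq0; apply: contraT => nz.
  have h : (t - t') *: z = 0 by rewrite scalerBl e subrr.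
  have : z = 0 by rewrite -[z]scale1r -(mulVf nz) -scalerA h scaler0.
  by move/eqP; rewrite (negbTE z0).
pose l x := match pselect (M x) with left H => projT1 (cid H) * p n z | right _ => 0 end.
have lE : forall t, l (t *: z) = t * p n z.
  move=> t; rewrite /l; case: pselect => [H|[]]; last by exists t.
  by case: (cid H) => t' /= /uniq ->.
have sP : subsp (fun _ : E => True) by [].
have sM : subsp M.
  split; first by exists 0; rewrite scale0r.
  move=> a _ _ [t ->] [t' ->]; exists (a * t + t'); by rewrite scalerDl scalerA.
have Aconv : forall x y (a c : K), p n x < 1 -> p n y < 1 -> `|a| + `|c| <= 1 ->
    p n (a *: x + c *: y) < 1.
  move=> x y a c hx hy hac; apply: le_lt_trans (pD _ _ _) _; rewrite !pZ.
  have hx' : `|a| * p n x <= `|a| by rewrite -[leRHS]mulr1 ler_wpM2l // ltW.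
  have hy' : `|c| * p n y <= `|c| by rewrite -[leRHS]mulr1 ler_wpM2l // ltW.
  case: (eqVneq a 0) => [a0|a0].
    rewrite a0 normr0 mul0r add0r; case: (eqVneq c 0) => [->|c0].
      by rewrite normr0 mul0r ltr01.
    apply: lt_le_trans (_ : `|c| <= 1); last by move: hac; rewrite a0 normr0 add0r.
    by rewrite -[ltRHS]mulr1 ltr_pM2l ?normr_gt0.
  apply: lt_le_trans hac; apply: ltr_leD => //.
  by rewrite -[ltRHS]mulr1 ltr_pM2l ?normr_gt0.
have Aabs : forall x, True -> exists s : K, 0 < s /\ p n (s^-1 *: x) < 1.
  move=> x _; have s0 : 0 < p n x + 1 by apply: ltr_wpDl => //; apply: p_ge0.
  exists (p n x + 1); split=> //.
  by rewrite pZ normfV (gtr0_norm s0) ltr_pdivrMl // mulr1 ltrDl ltr01.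
have lM : linon M l.
  move=> a _ _ [t ->] [t' ->]; rewrite scalerA -scalerDl !lE; ring.
have lA : forall x, M x -> p n x < 1 -> `|l x| <= 1.
  move=> _ [t ->]; rewrite lE pZ normrM (ger0_norm (p_ge0 n z)); exact: ltW.
have [L [hL hLM hLA]] := HBK sP sM (fun x _ => I) (fun x _ => I) Aconv Aabs lM lA.
have hl : forall a x y, L (a *: x + y) = a * L x + L y by move=> a x y; apply: hL.
exists L; split.
  split=> //; split=> //; exists n, 1 => x; rewrite mul1r.
  exact: polar_le'.
have h1 : M (1 *: z) by exists 1.
by have := hLM _ h1; rewrite lE mul1r scale1r.
Qed.

Lemma sepE (z : E) : (forall e', dualE e' -> e' z = 0) -> z = 0.
Proof.
move=> h; case: pE => _ _ _ _ [hs _]; apply: hs => n.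
have [e' [[de _] ez]] := norming n z; by rewrite -ez h.
Qed.

Lemma sepE2 (z1 z2 : E) : (forall e', dualE e' -> e' z1 = e' z2) -> z1 = z2.
Proof.
move=> h; apply/eqP; rewrite -subr_eq0; apply/eqP; apply: sepE => e' de.
by rewrite dualEB // h // subrr.
Qed.

Definition Phi (e' : E -> K) : FT :=
  match pselect (exists g, FVK g /\ forall m y, U m y -> TK m g y = e' (f m y)) with
  | left H => projT1 (cid H) | right _ => 0 end.

Lemma Phi_spec e' : dualE e' -> FVK (Phi e') /\ forall m y, U m y -> TK m (Phi e') y = e' (f m y).
Proof.
move=> de; rewrite /Phi; case: pselect => [H|[]]; last exact: (Hf.1 e' de).
by case: (cid H).
Qed.

Lemma An_Phi n e' : polarB n e' -> An n (Phi e').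
Proof. by move=> pe; exists e'; split=> //; apply: Phi_spec; case: pe. Qed.

Definition Fd (ds : seq (K * (Mset W * X W))) : E := \sum_(ct <- ds) ct.1 *: f ct.2.1 ct.2.2.

Lemma Fd_eval e' ds : dualE e' -> (forall ct, List.In ct ds -> U ct.2.1 ct.2.2) ->
  e' (Fd ds) = evd ds (Phi e').
Proof.
move=> de; rewrite /Fd /evd; elim: ds => [|ct ds IH] hU.
  by rewrite !big_nil dualE0.
rewrite !big_cons dualE_lin // IH; last by move=> c hc; apply: hU; right.
by rewrite (Phi_spec de).2 //; apply: hU; left.
Qed.

Lemma TKZ m a (g : FT) y : FVK g -> omega W m y -> TK m (a *: g) y = a * TK m g y.
Proof.
move=> [dg _ _] om; rewrite -[a *: g]addr0 TK_lin ?TK0 ?addr0 //; exact: domK0.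
Qed.

Lemma evd0 ds : (forall ct, List.In ct ds -> U ct.2.1 ct.2.2) -> evd ds 0 = 0.
Proof.
rewrite /evd; elim: ds => [|ct ds IH] hU; first by rewrite big_nil.
rewrite big_cons IH; last by move=> c hc; apply: hU; right.
by rewrite TK0 ?mulr0 ?addr0 //; apply: U_omega; apply: hU; left.
Qed.

Lemma evdZ ds a (g : FT) : (forall ct, List.In ct ds -> U ct.2.1 ct.2.2) -> FVK g ->
  evd ds (a *: g) = a * evd ds g.
Proof.
move=> hU Fg; rewrite -[a *: g]addr0 evd_lin //; last exact: FVK0.
by rewrite evd0 // addr0.
Qed.

Lemma zero_small (w : K) : (forall eta, 0 < eta -> `|w| <= eta) -> w = 0.
Proof.
move=> h; apply/eqP; apply: contraT => w0.
have hp : 0 < `|w| by rewrite normr_gt0.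
have := h (`|w| / 2) (divr_gt0 hp (ltr0Sn _ 1)).
rewrite ler_pdivlMr ?ltr0Sn // => h2.
have h3 : `|w| < `|w| * 2 by rewrite ltr_pMr // ltr1n.
by have := lt_le_trans h3 h2; rewrite ltxx.
Qed.

Definition epsk (k : nat) : K := ((k.+1)%:R)^-1.
Lemma epsk_gt0 k : 0 < epsk k. Proof. by rewrite /epsk invr_gt0 ltr0Sn. Qed.
Lemma epsk_mono k j : (k <= j)%N -> epsk j <= epsk k.
Proof. by move=> kj; rewrite /epsk lef_pV2 ?posrE ?ltr0Sn // ler_nat ltnS. Qed.
Lemma epsk_small (eta : K) : 0 < eta -> exists N, forall k, (N <= k)%N -> epsk k < eta.
Proof.
move=> e0; have [N hN] := archiRC e0; exists N => k Nk.
by apply: le_lt_trans hN; apply: epsk_mono.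
Qed.

Lemma exists_u (y : FT -> K) : dualFV y ->
  exists z : E, forall e', dualE e' -> e' z = y (Phi e').
Proof.
move=> dy.
have hd : forall k, exists ds, (forall ct, List.In ct ds -> U ct.2.1 ct.2.2) /\
    forall g, Kn k g -> `|y g - evd ds g| <= epsk k.
  by move=> k; apply: density => //; apply: epsk_gt0.
pose ds k := projT1 (cid (hd k)).
have dsU : forall k ct, List.In ct (ds k) -> U ct.2.1 ct.2.2.
  by move=> k; rewrite /ds; case: (cid (hd k)) => d [].
have dsA : forall k g, Kn k g -> `|y g - evd (ds k) g| <= epsk k.
  by move=> k; rewrite /ds; case: (cid (hd k)) => d [].
pose zs k := Fd (ds k).
have cauchy : forall n eta, 0 < eta -> exists N, forall i k, (N <= i)%N -> (N <= k)%N ->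
    p n (zs i - zs k) < eta.
  move=> n eta e0.
  have [N0 hN0] := epsk_small (divr_gt0 e0 (ltr0Sn _ 1)).
  exists (maxn n N0) => i k hi hk.
  have [e0' [pe ee]] := norming n (zs i - zs k).
  have de : dualE e0' by case: pe.
  have pr : 0 <= e0' (zs i - zs k) by rewrite ee; apply: p_ge0.
  rewrite -ee -(ger0_norm pr) dualEB // /zs !Fd_eval //; try apply: dsU.
  set g := Phi e0'.
  have gi : Kn i g by apply: An_Kn; apply: (An_mono (leq_trans (leq_maxl _ _) hi)); apply: An_Phi.
  have gk : Kn k g by apply: An_Kn; apply: (An_mono (leq_trans (leq_maxl _ _) hk)); apply: An_Phi.
  have hi' := dsA _ _ gi; have hk' := dsA _ _ gk.
  have ei : epsk i < eta / 2 by apply: hN0; apply: leq_trans (leq_maxr _ _) hi.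
  have ek : epsk k < eta / 2 by apply: hN0; apply: leq_trans (leq_maxr _ _) hk.
  have -> : evd (ds i) g - evd (ds k) g = - (y g - evd (ds i) g) + (y g - evd (ds k) g).
    by rewrite opprB addrA subrK.
  apply: le_lt_trans (ler_normD _ _) _; rewrite normrN.
  rewrite [X in _ < X](splitr eta).
  by apply: ltrD; apply: le_lt_trans; [exact: hi'|exact: ei|exact: hk'|exact: ek].
case: pE => _ _ _ _ [_ hc]; have [zl hzl] := hc zs cauchy.
exists zl => e' de.
case: (de) => _ [n0 [C hC]].
pose C' := `|C| + 1.
have C'0 : 0 < C' by apply: ltr_wpDl => //; apply: ltr01.
have hC' : forall x, `|e' x| <= C' * p n0 x.
  move=> x; have h := hC x; have h2 := real_mul_le h (p_ge0 n0 x).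
  apply: le_trans h _; apply: le_trans h2 _.
  by apply: ler_wpM2r; [apply: p_ge0 | rewrite lerDl ler01].
pose e'' := fun x => C'^-1 * e' x.
have pe'' : forall k, (n0 <= k)%N -> polarB k e''.
  move=> k hk; have de'' : dualE e''.
    split; first by move=> a x y'; rewrite /e'' dualE_lin //; ring.
    exists n0, 1 => x; rewrite mul1r /e'' normrM normfV (gtr0_norm C'0) ler_pdivrMl //.
  split=> // x hx; rewrite /e'' normrM normfV (gtr0_norm C'0) ler_pdivrMl // mulr1.
  have h3 : C' * p n0 x <= C'.
    rewrite -[leRHS]mulr1 (ler_wpM2l (ltW C'0)) //.
    by apply: le_trans (p_mono _ hk) (ltW hx).
  exact: le_trans (hC' x) h3.
have [Fg hg] := Phi_spec de.
set g := Phi e' in Fg hg *.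
pose g'' := C'^-1 *: g.
have Ag'' : forall k, (n0 <= k)%N -> Kn k g''.
  move=> k hk; apply: An_Kn; exists e''; split; first exact: pe'' k hk.
  split; first exact: FVKZ.
  move=> m y' Uy; rewrite /g'' TKZ ?hg //; exact: U_omega.
apply/eqP; rewrite -subr_eq0; apply/eqP; apply: zero_small => eta e0.
have e2 : 0 < eta / 2 / C' by rewrite !divr_gt0 // ltr0Sn.
have [N1 hN1] := hzl n0 _ e2.
have [N2 hN2] := epsk_small e2.
pose k := maxn n0 (maxn N1 N2).
have k0 : (n0 <= k)%N by apply: leq_maxl.
have k1 : (N1 <= k)%N by apply: leq_trans (leq_maxl _ _) (leq_maxr _ _).
have k2 : (N2 <= k)%N by apply: leq_trans (leq_maxr _ _) (leq_maxr _ _).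
have ez : e' (zs k) = evd (ds k) g by rewrite /zs Fd_eval //; apply: dsU.
have -> : e' zl - y g = - (e' (zs k - zl)) + (C' * (evd (ds k) g'' - y g'')).
  rewrite dualEB // ez /g'' evdZ ?(dualZ _ dy) //; last by apply: dsU.
  rewrite -mulrBr mulrA divff ?gt_eqF // mul1r opprB.
  by rewrite addrA subrK.
apply: ltW; apply: le_lt_trans (ler_normD _ _) _; rewrite normrN normrM (gtr0_norm C'0).
rewrite [X in _ < X](splitr eta); apply: ltrD.
  apply: le_lt_trans (hC' _) _; rewrite -ltr_pdivlMl // mulrC.
  by apply: hN1.
rewrite -ltr_pdivlMl // mulrC distrC; apply: le_lt_trans (dsA _ _ (Ag'' _ k0)) _.
exact: hN2.
Qed.

Definition u (y : FT -> K) : E :=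
  match pselect (dualFV y) with left H => projT1 (cid (exists_u H)) | right _ => 0 end.

Lemma u_spec y : dualFV y -> forall e', dualE e' -> e' (u y) = y (Phi e').
Proof.
move=> dy; rewrite /u; case: pselect => [H|//].
by case: (cid (exists_u H)).
Qed.

Lemma in_app_or' (A : Type) (s1 s2 : seq A) x : List.In x (s1 ++ s2) -> List.In x s1 \/ List.In x s2.
Proof. exact: List.in_app_or. Qed.

Lemma dual_comb a y1 y2 : dualFV y1 -> dualFV y2 -> dualFV (fun g => a * y1 g + y2 g).
Proof.
move=> d1 d2; split.
  by move=> a' g h Fg Fh; rewrite !dual_lin //; ring.
case: (d1) => _ [s1 [C1 h1]]; case: (d2) => _ [s2 [C2 h2]].
case: (eqVneq (size (s1 ++ s2)) 0%N) => [s0|sn0].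
  have e1 : s1 = [::] by case: s1 s0 {h1}.
  have e2 : s2 = [::] by move: s0; rewrite e1; case: s2 {h2}.
  exists [::], 0 => g Fg b0 _; rewrite mul0r.
  have z1 : y1 g = 0.
    by apply/normr0_eq0/eqP; rewrite eq_le normr_ge0 andbT; have := h1 g Fg 0; rewrite mulr0; apply; rewrite e1.
  have z2 : y2 g = 0.
    by apply/normr0_eq0/eqP; rewrite eq_le normr_ge0 andbT; have := h2 g Fg 0; rewrite mulr0; apply; rewrite e2.
  by rewrite z1 z2 mulr0 addr0 normr0.
exists (s1 ++ s2), (`|a| * `|C1| + `|C2|) => g Fg b0 hb.
have [i0 i0s] : exists i0, List.In i0 (s1 ++ s2).
  by case: (s1 ++ s2) sn0 => [//|i s _]; exists i; left.
have b00 : 0 <= b0 by apply: bnd_ge0 (hb _ i0s).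
have hb1 : `|y1 g| <= C1 * b0.
  by apply: h1 => // i hi; apply: hb; apply: List.in_or_app; left.
have hb2 : `|y2 g| <= C2 * b0.
  by apply: h2 => // i hi; apply: hb; apply: List.in_or_app; right.
apply: le_trans (ler_normD _ _) _; rewrite normrM mulrDl -mulrA.
apply: lerD.
  have h3 := real_mul_le hb1 b00.
  apply: ler_wpM2l => //; exact: le_trans hb1 h3.
have h4 := real_mul_le hb2 b00.
exact: le_trans hb2 h4.
Qed.

Lemma u_lin (a : K) y1 y2 : dualFV y1 -> dualFV y2 ->
  u (fun g => a * y1 g + y2 g) = a *: u y1 + u y2.
Proof.
move=> d1 d2; apply: sepE2 => e' de.
rewrite (u_spec (dual_comb a d1 d2)) // dualE_lin // !u_spec //.
Qed.

Lemma epsFV_u : epsFV domK TK p u.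
Proof.
split; first by move=> a y1 y2 d1 d2; apply: u_lin.
move=> n; exists [:: Kn n], 1; split.
  move=> Kc [<-|//]; split; [exact: Kn_absconv | exact: Kn_compact].
move=> y dy b0 hb; rewrite mul1r.
have [e0 [pe ee]] := norming n (u y).
have de : dualE e0 by case: pe.
rewrite -ee (u_spec dy de).
have pr : 0 <= y (Phi e0) by rewrite -(u_spec dy de) ee; apply: p_ge0.
rewrite -(ger0_norm pr); apply: hb; first by left.
by apply: An_Kn; apply: An_Phi.
Qed.

Lemma main_result : exists u, epsFV domK TK p u /\
  forall m y, U m y -> TE m (Sop u) y = f m y.
Proof.
exists u; split; first exact: epsFV_u.
move=> m y Um; have [_ _ ->] := Hcons epsFV_u (U_omega Um).
apply: sepE2 => e' de; rewrite (u_spec (U_dual Um) de).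
by rewrite /TKx (Phi_spec de).2.
Qed.

End Main.

Close Scope classical_set_scope.

Theorem corollary5p3
  (R : realType) (b : bool) (W : wdata (RC R b))
  (E : lmodType (RC R b)) (p : nat -> E -> RC R b)
  (domK : Mset W -> (Omega W -> (RC R b)^o) -> Prop)
  (TK : Mset W -> (Omega W -> (RC R b)^o) -> X W -> (RC R b)^o)
  (domE : Mset W -> (Omega W -> E) -> Prop)
  (TE : Mset W -> (Omega W -> E) -> X W -> E)
  (U : Mset W -> X W -> Prop)
  (HW : wdata_ok W)
  (HE : frechet p)
  (HlinK : lin_ops domK TK)
  (HlinE : lin_ops domE TE)
  (Hdom : dom_spaces domK TK p domE TE)
  (Hstrong : strong domK TK p domE TE)
  (Hcons : consistent domK TK p domE TE)
  (HMontel : semi_Montel domK TK)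
  (HU : set_of_uniqueness domK TK U) :
  forall f : Mset W -> X W -> E, FVE'U_sb domK TK p U f ->
    exists u, epsFV domK TK p u /\
      forall m y, U m y -> TE m (Sop u) y = f m y.
Proof.
move=> f Hf.
exact: (@main_result R b W E p domK TK domE TE U HW HE HlinK Hcons HMontel HU f Hf).
Qed.
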